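(* Let $k\in\mathbb{N}$, $x\ge1$ and $V\ge x^{1/k}$. Then for every $n\in\mathbb{N}$ with $n\le x$, \[ \mathbf{1}_{\mathbb{P}}(n)=\sum_{j=1}^k(-1)^{j-1}\binom kj\big(\mu_{\le V}^{*j}*\mathbf{1}^{*(j-1)}*\omega\big)(n). \]
   Context: $\mathbf{1}_{\mathbb{P}}$ is the indicator function of the primes; $\mu$ is the Möbius function and $\mu_{\le V}(n):=\mu(n)$ if $n\le V$ and $0$ otherwise; $\mathbf{1}(n)=1$ for all $n$; $\omega(n)$ is the number of distinct prime divisors of $n$. $*$ is Dirichlet convolution, $g^{*j}$ is the $j$-fold convolution of $g$ with itself, and $g^{*0}$ is the identity $\delta$ ($\delta(1)=1$, $\delta(n)=0$ for $n>1$). *)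

(* Defs.v *)
From HB Require Import structures.
From mathcomp Require Import all_boot all_order all_algebra.
From mathcomp Require Import reals exp.
Set Implicit Arguments. Unset Strict Implicit. Unset Printing Implicit Defensive.
Import Order.TTheory GRing.Theory Num.Theory.
Local Open Scope ring_scope.

(* Arithmetic functions: nat -> int; only values at n >= 1 matter. *)
Definition arith := nat -> int.

Definition dconv (f g : arith) : arith :=
  fun n => \sum_(d <- divisors n) f d * g (n %/ d)%N.

Definition delta : arith := fun n => (n == 1%N)%:Z.

Definition dpow (f : arith) (j : nat) : arith := iter j (dconv f) delta.

Definition one_fn : arith := fun _ => 1.

Definition ind_prime : arith := fun n => (prime n)%:Z.

Definition omega : arith := fun n => (size (primes n))%:Z.

Definition moebius : arith := fun n =>
  if n == 0%N then 0
  else if all (fun pe : nat * nat => pe.2 == 1%N) (prime_decomp n)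
       then (-1) ^+ size (primes n) else 0.

Definition mu_le (R : realType) (V : R) : arith :=
  fun n => if n%:R <= V then moebius n else 0.

(* Main.v *)
Require Import Defs.
From HB Require Import structures.
From mathcomp Require Import all_boot all_order all_algebra.
From mathcomp Require Import reals exp.
From mathcomp Require Import ring lra.
Set Implicit Arguments. Unset Strict Implicit. Unset Printing Implicit Defensive.
Import Order.TTheory GRing.Theory Num.Theory.
Local Open Scope ring_scope.

Section DR.
Variable N : nat.
Definition DT := {ffun 'I_N.+1 -> int}.
HB.instance Definition _ := GRing.Zmodule.on DT.

Definition dind (b : bool) : int := b%:R.

Definition dmul (f g : DT) : DT := [ffun i : 'I_N.+1 =>
  \sum_(a : 'I_N.+1) \sum_(b : 'I_N.+1) dind (a.+1 * b.+1 == i.+1)%N * (f a * g b)].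
Definition done_ : DT := [ffun i : 'I_N.+1 => dind (i == 0 :> nat)].

Lemma collapse (m : nat) (F : nat -> int) :
  \sum_(c : 'I_N.+1) dind (c.+1 == m) * F c.+1 = dind ((0 < m) && (m <= N.+1))%N * F m.
Proof.
case: (boolP ((0 < m) && (m <= N.+1))%N) => [/andP[m0 mN]|hm].
  have hc : (m.-1 < N.+1)%N by rewrite prednK.
  pose c0 := Ordinal hc; have e : (c0.+1 = m)%N by rewrite /= prednK.
  rewrite (bigD1 c0) //= e eqxx big1 ?addr0 //.
  move=> c hc'; have -> : (c.+1 == m) = false; last by rewrite mul0r.
  apply/negbTE; apply: contra hc'; rewrite -e => /eqP [] ec; by apply/eqP/val_inj.
rewrite mul0r big1 // => c _.
have -> : (c.+1 == m) = false; last by rewrite mul0r.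
apply/negbTE; apply: contra hm => /eqP <-; have := ltn_ord c; by [].
Qed.

Lemma dmulE f g i : dmul f g i =
  \sum_(a : 'I_N.+1) \sum_(b : 'I_N.+1) dind (a.+1 * b.+1 == i.+1)%N * (f a * g b).
Proof. by rewrite ffunE. Qed.

Lemma collapse2 (i : 'I_N.+1) (u v : nat) (Y : int) : (0 < u)%N ->
  \sum_(c : 'I_N.+1) dind (c.+1 * u == i.+1)%N * (dind (v == c.+1) * Y)
  = dind (v * u == i.+1)%N * Y.
Proof.
move=> u0.
transitivity (\sum_(c : 'I_N.+1) dind (c.+1 == v) * ((fun m => dind (m * u == i.+1)%N * Y) c.+1)).
  by apply eq_bigr => c _; rewrite [v == _]eq_sym /=; ring.
rewrite (collapse v (fun m => dind (m * u == i.+1)%N * Y)) mulrA; congr (_ * _).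
case: (boolP (v * u == i.+1)%N) => [/eqP e|]; last by rewrite /dind /= mulr0.
have v0 : (0 < v)%N by move: e; case: v => //; rewrite mul0n.
have : (v <= i.+1)%N by rewrite -e leq_pmulr.
move=> vi; have := ltn_ord i => iN.
by rewrite v0 /= (leq_trans vi iN) /dind /= mulr1.
Qed.

Lemma assoc_l f g h i : dmul (dmul f g) h i =
  \sum_(a : 'I_N.+1) \sum_(b : 'I_N.+1) \sum_(d : 'I_N.+1)
     dind (a.+1 * b.+1 * d.+1 == i.+1)%N * (f a * g b * h d).
Proof.
rewrite dmulE.
transitivity (\sum_(c : 'I_N.+1) \sum_(d : 'I_N.+1) \sum_(a : 'I_N.+1) \sum_(b : 'I_N.+1)
   dind (c.+1 * d.+1 == i.+1)%N * (dind (a.+1 * b.+1 == c.+1)%N * (f a * g b * h d))).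
  apply eq_bigr => c _; apply eq_bigr => d _; rewrite ffunE big_distrl big_distrr /=.
  apply eq_bigr => a _; rewrite big_distrl big_distrr /=; apply eq_bigr => b _ /=; ring.
rewrite exchange_big /=.
under eq_bigr => d _ do rewrite exchange_big /=.
under eq_bigr => d _ do under eq_bigr => a _ do rewrite exchange_big /=.
rewrite exchange_big /=.
under eq_bigr => a _ do rewrite exchange_big /=.
apply eq_bigr => a _; apply eq_bigr => b _; apply eq_bigr => d _.
by rewrite collapse2.
Qed.

Lemma assoc_r f g h i : dmul f (dmul g h) i =
  \sum_(a : 'I_N.+1) \sum_(b : 'I_N.+1) \sum_(d : 'I_N.+1)
     dind (a.+1 * b.+1 * d.+1 == i.+1)%N * (f a * g b * h d).
Proof.
rewrite dmulE.
transitivity (\sum_(a : 'I_N.+1) \sum_(e : 'I_N.+1) \sum_(b : 'I_N.+1) \sum_(d : 'I_N.+1)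
   dind (e.+1 * a.+1 == i.+1)%N * (dind (b.+1 * d.+1 == e.+1)%N * (f a * g b * h d))).
  apply eq_bigr => a _; apply eq_bigr => e _; rewrite ffunE big_distrr big_distrr /=.
  apply eq_bigr => b _; rewrite big_distrr big_distrr /=; apply eq_bigr => d _ /=.
  rewrite mulnC; ring.
apply eq_bigr => a _.
rewrite exchange_big /=.
under eq_bigr => b _ do rewrite exchange_big /=.
apply eq_bigr => b _; apply eq_bigr => d _.
by rewrite collapse2 // mulnC mulnA.
Qed.

Lemma dmulA : associative dmul.
Proof. by move=> f g h; apply/ffunP => i; rewrite assoc_r assoc_l. Qed.

Lemma dmulC : commutative dmul.
Proof.
move=> f g; apply/ffunP => i; rewrite !dmulE exchange_big /=.
apply eq_bigr => a _; apply eq_bigr => b _; by rewrite mulnC [f b * _]mulrC.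
Qed.

Lemma collapse_ord (i : 'I_N.+1) (G : 'I_N.+1 -> int) :
  \sum_(c : 'I_N.+1) dind (c.+1 == i.+1)%N * G c = G i.
Proof.
rewrite (bigD1 i) //= eqxx mul1r big1 ?addr0 // => c ci.
have -> : (c.+1 == i.+1)%N = false; last by rewrite mul0r.
by apply/negbTE; rewrite eqSS.
Qed.

Lemma dmul1 : left_id done_ dmul.
Proof.
move=> g; apply/ffunP => i; rewrite dmulE big_ord_recl /=.
have -> : \sum_(a < N) \sum_(b < N.+1) dind ((lift ord0 a).+1 * b.+1 == i.+1)%N *
    (done_ (lift ord0 a) * g b) = 0.
  rewrite big1 // => a _; rewrite big1 // => b _; by rewrite ffunE /= mul0r mulr0.
rewrite addr0 -[RHS](collapse_ord i g); apply eq_bigr => b _.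
by rewrite ffunE /= mul1n mul1r.
Qed.

Lemma dmulDl : left_distributive dmul +%R.
Proof.
move=> f g h; apply/ffunP => i; rewrite dmulE [in RHS]ffunE !dmulE -big_split /=.
apply eq_bigr => a _; rewrite -big_split /=; apply eq_bigr => b _.
by rewrite ffunE mulrDl mulrDr.
Qed.

Lemma done_neq0 : done_ != 0.
Proof. apply/eqP => /ffunP /(_ ord0); by rewrite !ffunE. Qed.

HB.instance Definition _ := GRing.Zmodule_isComNzRing.Build DT dmulA dmulC dmul1 dmulDl done_neq0.

End DR.

Lemma dindE (b : bool) (x : int) : dind b * x = if b then x else 0.
Proof. by case: b; rewrite /dind /= ?mul1r ?mul0r. Qed.

Lemma divisors_iota m N : (0 < m)%N -> (m <= N.+1)%N ->
  divisors m = [seq d <- iota 1 N.+1 | (d %| m)%N].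
Proof.
move=> m0 mN; apply: (irr_sorted_eq ltn_trans ltnn).
- exact: sorted_divisors_ltn.
- exact/sorted_filter/iota_ltn_sorted/ltn_trans.
move=> d; rewrite mem_filter mem_iota -dvdn_divisors //.
case: (boolP (d %| m)%N) => //= dm.
have d0 : (0 < d)%N by apply: dvdn_gt0 dm.
by rewrite d0 add1n ltnS (leq_trans (dvdn_leq m0 dm) mN).
Qed.

Lemma sum_divisors m N (F : nat -> int) : (0 < m)%N -> (m <= N.+1)%N ->
  \sum_(d <- divisors m) F d = \sum_(a : 'I_N.+1) dind (a.+1 %| m)%N * F a.+1.
Proof.
move=> m0 mN; rewrite (divisors_iota m0 mN) big_filter big_mkcond.
have -> : iota 1 N.+1 = map (addn 1) (iota 0 N.+1) by rewrite -iotaDl.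
rewrite big_map -(big_mkord xpredT (fun a => dind (a.+1 %| m)%N * F a.+1)).
by rewrite /index_iota subn0; apply eq_bigr => a _; rewrite dindE add1n.
Qed.

Definition E N (f : nat -> int) : DT N := [ffun i : 'I_N.+1 => f i.+1].

Lemma E_conv N f g : E N (dconv f g) = E N f * E N g.
Proof.
apply/ffunP => i; rewrite [in RHS]/GRing.mul /= dmulE ffunE /dconv.
rewrite (sum_divisors _ (ltn0Sn _) (ltn_ord i)).
apply eq_bigr => a _.
case: (boolP (a.+1 %| i.+1)%N) => ad; last first.
  rewrite mul0r big1 // => b _.
  have -> : (a.+1 * b.+1 == i.+1)%N = false; last by rewrite mul0r.
  apply/negbTE; apply: contra ad => /eqP <-; exact: dvdn_mulr.
symmetry; transitivity (\sum_(b : 'I_N.+1) dind (b.+1 == i.+1 %/ a.+1)%N *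
   ((fun m => f a.+1 * g m) b.+1)).
  apply eq_bigr => b _; rewrite !ffunE /=.
  by rewrite (eqn_div _ (ltn0Sn _) ad) mulnC.
rewrite (@collapse N (i.+1 %/ a.+1) (fun m => f a.+1 * g m)) /dind.
rewrite divn_gt0 // (dvdn_leq (ltn0Sn _) ad) /=.
rewrite (leq_trans (leq_div _ _) (ltn_ord i)) mul1r //.
Qed.

Lemma sqf_all n : all (fun pe : nat * nat => pe.2 == 1%N) (prime_decomp n) =
  all (fun p => logn p n == 1%N) (primes n).
Proof. by rewrite prime_decompE all_map. Qed.

Lemma perm_primes_p p d : prime p -> (0 < d)%N -> ~~ (p %| d)%N ->
  perm_eq (primes (p * d)%N) (p :: primes d).
Proof.
move=> pp d0 npd; apply: uniq_perm.
- exact: primes_uniq.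
- by rewrite /= primes_uniq andbT mem_primes pp d0 /= npd.
move=> q; rewrite (primesM _ (prime_gt0 pp) d0) (primes_prime pp) !inE //.
Qed.

Lemma moebius_mul_p p d : prime p -> (0 < d)%N -> ~~ (p %| d)%N ->
  moebius (p * d)%N = - moebius d.
Proof.
move=> pp d0 npd; have pd0 : (0 < p * d)%N by rewrite muln_gt0 prime_gt0.
have hp := perm_primes_p pp d0 npd.
rewrite /moebius !sqf_all (perm_size hp) (perm_all _ hp) /=.
have -> : (p * d == 0)%N = false by rewrite eqn0Ngt pd0.
have -> : (d == 0)%N = false by rewrite eqn0Ngt d0.
have -> : (logn p (p * d)%N == 1%N) = true.
  rewrite (lognM _ (prime_gt0 pp) d0) (logn_prime _ pp) eqxx.
  have : logn p d = 0%N by apply/eqP; rewrite -leqn0 leqNgt logn_gt0 mem_primes pp d0 /= npd.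
  by move=> ->.
have -> : all (fun q => logn q (p * d)%N == 1%N) (primes d) =
          all (fun q => logn q d == 1%N) (primes d).
  apply: eq_in_all => q; rewrite mem_primes => /and3P[qp _ qd].
  rewrite (lognM _ (prime_gt0 pp) d0) (logn_prime _ pp).
  have -> : (q == p) = false; last by rewrite add0n.
  by apply/negbTE; apply: contra npd => /eqP <-.
case: (all _ _) => /=; last by rewrite oppr0.
by rewrite exprS mulN1r.
Qed.

Lemma moebius_mul_pp p d : prime p -> (0 < d)%N -> (p %| d)%N ->
  moebius (p * d)%N = 0.
Proof.
move=> pp d0 pd; have pd0 : (0 < p * d)%N by rewrite muln_gt0 prime_gt0.
rewrite /moebius sqf_all.
have -> : (p * d == 0)%N = false by rewrite eqn0Ngt pd0.
have -> : all (fun q => logn q (p * d)%N == 1%N) (primes (p * d)%N) = false => //.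
apply/negbTE/allPn; exists p.
  by rewrite mem_primes pp pd0 dvdn_mulr.
rewrite (lognM _ (prime_gt0 pp) d0) (logn_prime _ pp) eqxx.
have : (0 < logn p d)%N by rewrite logn_gt0 mem_primes pp d0 pd.
by case: (logn p d).
Qed.

Lemma moebius_sum m : (0 < m)%N -> \sum_(d <- divisors m) moebius d = (m == 1%N)%:Z.
Proof.
move=> m0; case: (ltngtP m 1) => [|m1|->]; first by rewrite ltnNge m0.
  set p := pdiv m; have pp : prime p by apply: pdiv_prime.
  have pm : (p %| m)%N by apply: pdiv_dvd.
  set m2 := (m %/ p)%N.
  have ep : m = (p * m2)%N by rewrite mulnC divnK.
  have m20 : (0 < m2)%N by move: m0; rewrite ep muln_gt0 => /andP[].
  have p0 := prime_gt0 pp.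
  rewrite (bigID (fun d => p %| d)%N) /=.
  have e1 : perm_eq [seq d <- divisors m | (p %| d)%N] (map (muln p) (divisors m2)).
    apply: uniq_perm; first by rewrite filter_uniq // divisors_uniq.
      rewrite map_inj_uniq ?divisors_uniq // => x y /eqP; rewrite eqn_pmul2l // => /eqP.
      done.
    move=> x; rewrite mem_filter -dvdn_divisors //; apply/andP/mapP.
      move=> [px xm]; exists (x %/ p)%N; last by rewrite mulnC divnK.
      rewrite -dvdn_divisors // /m2 -(dvdn_pmul2r p0) !divnK //.
    move=> [y]; rewrite -dvdn_divisors // => ym2 ->; split; first exact: dvdn_mulr.
    by rewrite ep dvdn_pmul2l.
  have e2 : [seq d <- divisors m | ~~ (p %| d)%N] =i [seq d <- divisors m2 | ~~ (p %| d)%N].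
    move=> x; rewrite !mem_filter -!dvdn_divisors //.
    case: (boolP (p %| x)%N) => //= npx.
    apply/idP/idP => [xm|xm2]; last by rewrite ep dvdn_mull.
    have : coprime x p by rewrite coprime_sym prime_coprime.
    by move/Gauss_dvdr <-; rewrite -ep.
  rewrite -big_filter (perm_big _ e1) big_map.
  rewrite -[X in _ + X]big_filter.
  rewrite (perm_big _ (uniq_perm (filter_uniq _ (divisors_uniq _)) (filter_uniq _ (divisors_uniq _)) e2)).
  rewrite big_filter (bigID (fun d => p %| d)%N) /=.
  have -> : \sum_(i <- divisors m2 | (p %| i)%N) moebius (p * i)%N = 0.
    apply: big1_seq => y /andP[py]; rewrite -dvdn_divisors // => ym2.
    by apply: moebius_mul_pp => //; exact: dvdn_gt0 ym2.
  rewrite add0r -big_split /= big1_seq // => y /andP[npy]; rewrite -dvdn_divisors // => ym2.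
  by rewrite moebius_mul_p ?addNr //; exact: dvdn_gt0 ym2.
by rewrite (@divisors_iota 1 0) //= big_cons big_nil addr0.
Qed.


Lemma ev1 N (i : 'I_N.+1) : (1 : DT N) i = dind (i == 0 :> nat).
Proof. by rewrite /GRing.one /= ffunE. Qed.

Lemma evMn N (X : DT N) n i : (X *+ n) i = X i *+ n.
Proof.
elim: n => [|n IH]; first by rewrite !mulr0n ffunE.
by rewrite !mulrS ffunE IH.
Qed.

Lemma evsign N (X : DT N) e i : ((-1) ^+ e * X) i = (-1) ^+ e * X i.
Proof.
elim: e => [|e IH]; first by rewrite !expr0 !mul1r.
by rewrite !exprS -!mulrA !mulN1r ffunE IH.
Qed.

Lemma E_delta N : E N delta = 1.
Proof. by apply/ffunP => i; rewrite ev1 ffunE /delta /dind eqSS; case: (i == 0 :> nat). Qed.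

Lemma E_dpow N f j : E N (dpow f j) = (E N f) ^+ j.
Proof.
elim: j => [|j IH]; first by rewrite expr0 -E_delta.
by rewrite exprS -IH /dpow iterS E_conv.
Qed.

Lemma sum_prime_count (s : seq nat) m :
  \sum_(d <- s) ind_prime d * one_fn (m %/ d)%N = (count prime s)%:Z.
Proof.
elim: s => [|d s IH]; first by rewrite big_nil.
by rewrite big_cons IH /= /one_fn /ind_prime mulr1 PoszD.
Qed.

Lemma omega_conv m : (0 < m)%N -> omega m = dconv ind_prime one_fn m.
Proof.
move=> m0; rewrite /omega /dconv.
have -> : primes m = [seq d <- divisors m | prime d].
  apply: (irr_sorted_eq ltn_trans ltnn).
  - exact: sorted_primes.
  - exact/sorted_filter/sorted_divisors_ltn/ltn_trans.
  by move=> d; rewrite mem_filter mem_primes -dvdn_divisors // m0.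
by rewrite size_filter sum_prime_count.
Qed.

Definition vanish (R : realType) N (F : DT N) (t : R) :=
  forall a : 'I_N.+1, (a.+1)%:R <= t -> F a = 0.

Lemma vanish_mul (R : realType) N (F G : DT N) (s t : R) : 0 < s -> 0 <= t ->
  vanish F s -> vanish G t -> vanish (F * G) (s * t).
Proof.
move=> s0 t0 hF hG i hi; rewrite [F * G]/GRing.mul /= dmulE.
apply: big1 => a _; apply: big1 => b _.
case: (boolP (a.+1 * b.+1 == i.+1)%N) => [/eqP e|]; last by rewrite /dind /= mul0r.
case: (lerP (a.+1)%:R s) => [/hF -> |sa]; first by rewrite mul0r mulr0.
case: (lerP (b.+1)%:R t) => [/hG -> |tb]; first by rewrite mulr0 mulr0.
exfalso; move: hi; rewrite -e natrM => hi.
have A0 : (0 : R) < (b.+1)%:R by rewrite ltr0n.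
nra.
Qed.

Lemma vanish_mulr (R : realType) N (F G : DT N) (t : R) :
  vanish F t -> vanish (F * G) t.
Proof.
move=> hF i hi; rewrite [F * G]/GRing.mul /= dmulE.
apply: big1 => a _; apply: big1 => b _.
case: (boolP (a.+1 * b.+1 == i.+1)%N) => [/eqP e|]; last by rewrite /dind /= mul0r.
rewrite hF ?mul0r ?mulr0 //; apply: le_trans hi; rewrite ler_nat -e.
by rewrite leq_pmulr.
Qed.

Lemma vanish_exp (R : realType) N (H : DT N) (V : R) k : 0 < V -> (0 < k)%N ->
  vanish H V -> vanish (H ^+ k) (V ^+ k).
Proof.
move=> V0 + hH; elim: k => // k IH _.
case: k IH => [|k] IH; first by rewrite !expr1.
rewrite exprS [V ^+ k.+2]exprS; apply: vanish_mul => //.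
  by rewrite exprn_ge0 // ltW.
exact: IH.
Qed.

Unset Implicit Arguments.
Set Strict Implicit.

Theorem lemma5p4 (R : realType) (k : nat) (x V : R) :
  (1 <= k)%N -> 1 <= x -> x `^ (k%:R^-1) <= V ->
  forall n : nat, (0 < n)%N -> n%:R <= x ->
  ind_prime n =
  \sum_(1 <= j < k.+1)
     (-1) ^+ (j.-1) * ('C(k, j))%:Z *
     dconv (dconv (dpow (mu_le V) j) (dpow one_fn j.-1)) omega n.
Proof.
move=> k1 x1 hV n n0 nx.
have x0 : 0 < x by apply: lt_le_trans x1.
have V0 : 0 < V by apply: lt_le_trans hV; apply: powR_gt0.
have xV : x <= V ^+ k.
  have kn : (k%:R : R) != 0 by rewrite pnatr_eq0 -lt0n.
  rewrite -{1}(powRr1 (ltW x0)) -(mulVf kn) powRrM powR_mulrn ?powR_ge0 //.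
  by apply: lerXn2r; rewrite ?nnegrE ?powR_ge0 ?(ltW V0).
pose i : 'I_n.+1 := inord n.-1.
have ei : (i.+1 = n)%N by rewrite /i inordK ?prednK // ltnS leq_pred.
have Ef : forall f, f n = E n f i by move=> f; rewrite ffunE ei.
set M := E n (mu_le V); set U := E n one_fn; set P := E n ind_prime.
set G := M * U.
have hW : E n omega = P * U.
  by apply/ffunP => a; rewrite -E_conv !ffunE omega_conv.
have term : forall j, (0 < j)%N ->
    E n (dconv (dconv (dpow (mu_le V) j) (dpow one_fn j.-1)) omega) = G ^+ j * P.
  move=> j j0; rewrite !E_conv !E_dpow hW /G exprMn.
  case: j j0 => // j _ /=; rewrite [U ^+ j.+1]exprSr -/M -/U; ring.
rewrite [RHS](eq_big_nat _ _ (F2 := fun j => (-1) ^+ (j.-1) * ('C(k, j))%:Z * (G ^+ j * P) i)); last first.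
  by move=> j /andP[j1 _]; rewrite Ef term.
have ev : forall j, (-1) ^+ (j.-1) * ('C(k, j))%:Z * (G ^+ j * P) i =
    (((-1) ^+ (j.-1) * (G ^+ j * P)) *+ 'C(k, j)) i.
  by move=> j; rewrite evMn evsign -mulr_natr natz mulrAC.
under eq_bigr => j _ do rewrite ev.
rewrite -sum_ffunE.
have e1 : (1 - G) ^+ k = 1 + \sum_(j < k) ((-1) ^+ j.+1 * G ^+ j.+1) *+ 'C(k, j.+1).
  rewrite addrC exprD1n big_ord_recl /= expr0 bin0 mulr1n; congr (_ + _).
  by apply eq_bigr => j _; rewrite /bump /= add1n (exprNn G).
set S := \sum_(_ <= _ < _) _.
have -> : S = P - (1 - G) ^+ k * P.
  rewrite /S (big_addn 0 k.+1 1) subSS subn0 e1.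
  rewrite mulrDl mul1r opprD addrA subrr add0r mulr_suml -sumrN.
  rewrite -[RHS](big_mkord xpredT (fun j => - ((-1) ^+ j.+1 * G ^+ j.+1 *+ 'C(k, j.+1) * P))).
  apply: eq_big_nat => j _; rewrite addn1 mulrnAl -mulNrn; congr (_ *+ _).
  by rewrite [(-1) ^+ j.+1]exprS mulN1r !mulNr opprK mulrA.
set Y := (1 - G) ^+ k * P.
have -> : (P - Y) i = P i - Y i by rewrite [LHS]ffunE [(- Y) i]ffunE.
rewrite {1}/P ffunE ei.
have hH : vanish (1 - G) V.
  move=> a ha; rewrite ffunE [(- G) a]ffunE ev1 /G -E_conv ffunE /dconv.
  rewrite (eq_big_seq moebius); last first.
    move=> d; rewrite -dvdn_divisors // => da.
    rewrite /mu_le /one_fn mulr1 ifT //; apply: le_trans ha.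
    by rewrite ler_nat dvdn_leq.
  by rewrite moebius_sum // eqSS /dind natz subrr.
rewrite (vanish_mulr _ (vanish_exp V0 k1 hH)) ?subr0 //.
by rewrite ei; apply: le_trans xV.
Qed.
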